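(* Let $S$ be a numerical semigroup. If $\mathrm{Ap}(S)$ is $\alpha$-rectangular then it is $\beta$-rectangular, and if it is $\beta$-rectangular then it is $\gamma$-rectangular. Both implications are strict: $S=\langle 8,10,15\rangle$ has $\beta$-rectangular but not $\alpha$-rectangular Apéry set, and $S=\langle 8,10,11,12\rangle$ has $\gamma$-rectangular but not $\beta$-rectangular Apéry set.
   Context: A numerical semigroup is a submonoid $S$ of $(\mathbb N,+)$ with finite complement in $\mathbb N$; $g_1<\dots<g_\nu$ is its minimal system of generators, $m=g_1$, and $\mathrm{Ap}(S)=\{s\in S: s-m\notin S\}$. A representation of $s\in S$ is an expression $s=\sum_{i=1}^\nu\lambda_ig_i$, $\lambda_i\in\mathbb N$; $\mathrm{ord}(s)$ is the maximum of $\sum\lambda_i$ over all representations; a representation is maximal if $\sum\lambda_i=\mathrm{ord}(s)$. For $i=2,\dots,\nu$: $\alpha_i=\max\{h: hg_i\in\mathrm{Ap}(S)\}$; $\beta_i=\max\{h: hg_i\in\mathrm{Ap}(S),\ \mathrm{ord}(hg_i)=h\}$; $\gamma_i=\max\{h: hg_i\in\mathrm{Ap}(S),\ \mathrm{ord}(hg_i)=h,\ hg_i\text{ has a unique maximal representation}\}$ (all $h\in\mathbb N$). For $\delta\in\{\alpha,\beta,\gamma\}$, $\mathrm{Ap}(S)$ is $\delta$-rectangular if $\mathrm{Ap}(S)=\{\sum_{i=2}^\nu\lambda_ig_i: 0\le\lambda_i\le\delta_i\}$. *)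

(* Defs.v *)
From mathcomp Require Import all_boot.
Set Implicit Arguments. Unset Strict Implicit. Unset Printing Implicit Defensive.

(* A numerical semigroup S is represented by its minimal system of generators
   g = [:: g_1; ...; g_nu] (0-based: gen g 0 = g_1 = m, ..., gen g (size g).-1). *)
Definition gen (g : seq nat) (i : nat) : nat := nth 0 g i.

Definition repr_of (g : seq nat) (l : nat -> nat) (s : nat) : Prop :=
  s = \sum_(0 <= i < size g) l i * gen g i.

Definition rlen (g : seq nat) (l : nat -> nat) : nat := \sum_(0 <= i < size g) l i.

Definition inS (g : seq nat) (s : nat) : Prop := exists l, repr_of g l s.

Definition is_numsgp_mingens (g : seq nat) : Prop :=
  [/\ sorted ltn g, 0 < gen g 0,
      (exists F, forall x, F <= x -> inS g x) &
      (forall i, i < size g -> ~ exists l, l i = 0 /\ repr_of g l (gen g i))].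

Definition mult (g : seq nat) : nat := gen g 0.

(* Apery set w.r.t. m: s in S and s - m not in S (s - m < 0 counts as not in S) *)
Definition Ap (g : seq nat) (s : nat) : Prop :=
  inS g s /\ ~ (mult g <= s /\ inS g (s - mult g)).

Definition ord_eq (g : seq nat) (s k : nat) : Prop :=
  (exists l, repr_of g l s /\ rlen g l = k) /\
  (forall l, repr_of g l s -> rlen g l <= k).

Definition maxrep (g : seq nat) (s : nat) (l : nat -> nat) : Prop :=
  repr_of g l s /\ ord_eq g s (rlen g l).

Definition unique_maxrep (g : seq nat) (s : nat) : Prop :=
  exists l, maxrep g s l /\
    forall l', maxrep g s l' -> forall i, i < size g -> l' i = l i.

Definition is_max (P : nat -> Prop) (a : nat) : Prop :=
  P a /\ forall h, P h -> h <= a.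

Definition Palpha (g : seq nat) (i h : nat) : Prop := Ap g (h * gen g i).
Definition Pbeta (g : seq nat) (i h : nat) : Prop :=
  Ap g (h * gen g i) /\ ord_eq g (h * gen g i) h.
Definition Pgamma (g : seq nat) (i h : nat) : Prop :=
  [/\ Ap g (h * gen g i), ord_eq g (h * gen g i) h & unique_maxrep g (h * gen g i)].

(* Ap(S) is delta-rectangular, where delta_i = max {h | P g i h} for
   i = 2..nu (0-based: 1 <= i < size g) *)
Definition rectangular (P : seq nat -> nat -> nat -> Prop) (g : seq nat) : Prop :=
  exists d : nat -> nat,
    (forall i, 0 < i < size g -> is_max (P g i) (d i)) /\
    (forall s, Ap g s <->
       exists l : nat -> nat,
         (forall i, 0 < i < size g -> l i <= d i) /\
         s = \sum_(1 <= i < size g) l i * gen g i).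

(* Main.v *)
From Stdlib Require Import Classical.
From mathcomp Require Import all_boot zify.
Require Import Defs.
Set Implicit Arguments. Unset Strict Implicit.

Lemma sum0 n (w : nat -> nat) : \sum_(0 <= i < n) 0 * w i = 0.
Proof. by rewrite big1. Qed.

Lemma sum_single n i (F : nat -> nat) :
  \sum_(0 <= k < n) (if k == i then F k else 0) = if i < n then F i else 0.
Proof.
elim: n => [|n IH]; first by rewrite big_geq.
rewrite big_nat_recr //= IH.
have [H|H|H] := ltngtP i n.
- by rewrite ltnS (ltnW H) addn0.
- by rewrite ltnS leqNgt H.
- by subst; rewrite ltnS leqnn.
Qed.

Lemma sum_lin n (a b c d w : nat -> nat) : (forall i, a i + b i = c i + d i) ->
  \sum_(0<=i<n) a i * w i + \sum_(0<=i<n) b i * w i =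
  \sum_(0<=i<n) c i * w i + \sum_(0<=i<n) d i * w i.
Proof. move=> H; rewrite -!big_split /=; apply: eq_bigr => i _; by rewrite -!mulnDl H. Qed.

Lemma sum_lin1 n (a b c d : nat -> nat) : (forall i, a i + b i = c i + d i) ->
  \sum_(0<=i<n) a i + \sum_(0<=i<n) b i =
  \sum_(0<=i<n) c i + \sum_(0<=i<n) d i.
Proof. move=> H; rewrite -!big_split /=; apply: eq_bigr => i _; by rewrite H. Qed.

Definition e (i h : nat) : nat -> nat := fun k => if k == i then h else 0.

Lemma sum_e n i h (w : nat -> nat) : i < n -> \sum_(0<=k<n) e i h k * w k = h * w i.
Proof.
move=> Hi; rewrite (eq_bigr (fun k => if k == i then h * w k else 0)).
  by rewrite sum_single Hi.
by move=> k _; rewrite /e; case: eqP.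
Qed.

Lemma rlen_e n i h : i < n -> \sum_(0<=k<n) e i h k = h.
Proof. move=> Hi; rewrite (eq_bigr (fun k => if k == i then h else 0)).
  by rewrite sum_single Hi.
by move=> k _; rewrite /e; case: eqP.
Qed.

Lemma leq_sum_nat n (a b : nat -> nat) : (forall i, i < n -> a i <= b i) ->
  \sum_(0<=i<n) a i <= \sum_(0<=i<n) b i.
Proof.
move=> H; rewrite big_nat_cond [X in _ <= X]big_nat_cond.
by apply: leq_sum => i /andP[/andP[_ Hi] _]; apply: H.
Qed.

Lemma sum_eq_pt n (a b : nat -> nat) : (forall i, i < n -> a i <= b i) ->
  \sum_(0<=i<n) b i <= \sum_(0<=i<n) a i -> forall j, j < n -> a j = b j.
Proof.
move=> H Hs j Hj.
pose za := fun k => if k == j then 0 else a k.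
pose zb := fun k => if k == j then 0 else b k.
have Ea : \sum_(0<=i<n) za i + \sum_(0<=i<n) e j (a j) i = \sum_(0<=i<n) a i + \sum_(0<=i<n) (fun _ => 0) i.
  by apply: sum_lin1 => i; rewrite /za /e; case: eqP => [->|]; rewrite ?addn0.
have Eb : \sum_(0<=i<n) zb i + \sum_(0<=i<n) e j (b j) i = \sum_(0<=i<n) b i + \sum_(0<=i<n) (fun _ => 0) i.
  by apply: sum_lin1 => i; rewrite /zb /e; case: eqP => [->|]; rewrite ?addn0.
have Hz : \sum_(0<=i<n) za i <= \sum_(0<=i<n) zb i.
  by apply: leq_sum_nat => i Hi; rewrite /za /zb; case: eqP => // _; apply: H.
have Z : \sum_(0<=i<n) (fun _ => 0) i = 0 by rewrite big1.
rewrite !rlen_e // Z in Ea Eb.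
have := H j Hj. lia.
Qed.

Lemma bounded_max (P : nat -> Prop) a B : P a -> (forall n, P n -> n <= B) ->
  exists k, P k /\ forall n, P n -> n <= k.
Proof.
move=> Pa HB.
suff: forall t a, B - a <= t -> P a -> exists k, P k /\ forall n, P n -> n <= k.
  by move=> /(_ (B - a) a (leqnn _) Pa).
elim => [|t IH] {}a Ht {}Pa.
  exists a; split => // n Pn; have := HB n Pn; lia.
case: (classic (exists n, P n /\ a < n)) => [[n [Pn an]]|Hn].
  apply: (IH n) => //; have := HB n Pn; lia.
exists a; split => // n Pn; rewrite leqNgt; apply/negP => an; apply: Hn; by exists n.
Qed.

Lemma repr_add g l l' a b : repr_of g l a -> repr_of g l' b ->
  repr_of g (fun k => l k + l' k) (a + b).
Proof. by rewrite /repr_of => -> ->; rewrite -big_split; apply: eq_bigr => i _; rewrite mulnDl. Qed.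

Lemma inS_add g a b : inS g a -> inS g b -> inS g (a + b).
Proof. by move=> [l Hl] [l' Hl']; exists (fun k => l k + l' k); apply: repr_add. Qed.

Lemma Ap_sub g s a b : Ap g s -> s = a + b -> inS g a -> inS g b -> Ap g a.
Proof.
move=> [Hs Hn] Hab Ha Hb; split => // [[Hm Ham]]; apply: Hn; split; first lia.
have -> : s - mult g = (a - mult g) + b by lia.
exact: inS_add.
Qed.

Lemma repr_split g l s j : repr_of g l s -> j < size g ->
  s = l j * gen g j + \sum_(0 <= i < size g) (if i == j then 0 else l i) * gen g i.
Proof.
move=> -> Hj.
have := @sum_lin (size g) (fun i => if i == j then 0 else l i) (e j (l j)) l (fun _ => 0) (gen g).
rewrite sum_e // sum0 addn0 => <-; first by rewrite addnC.
by move=> i; rewrite /e; case: eqP => [->|]; rewrite ?addn0.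
Qed.

Lemma rlen_split g l j : j < size g ->
  rlen g l = l j + rlen g (fun i => if i == j then 0 else l i).
Proof.
move=> Hj; rewrite /rlen.
have := @sum_lin1 (size g) (fun i => if i == j then 0 else l i) (e j (l j)) l (fun _ => 0).
have Z : \sum_(0<=i<size g) (fun _ => 0) i = 0 by rewrite big1.
rewrite rlen_e // Z addn0 => <-; first by rewrite addnC.
by move=> i; rewrite /e; case: eqP => [->|]; rewrite ?addn0.
Qed.

Lemma Ap_coef g l s j : Ap g s -> repr_of g l s -> j < size g -> Ap g (l j * gen g j).
Proof.
move=> HA Hl Hj; apply: (Ap_sub HA (repr_split Hl Hj)).
  by exists (e j (l j)); rewrite /repr_of sum_e.
by eexists.
Qed.

Lemma rep0 g l s : 0 < size g -> Ap g s -> repr_of g l s -> l 0 = 0.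
Proof.
move=> Hn [_ HA] Hl; apply/eqP; rewrite -leqn0 leqNgt; apply/negP => H0.
apply: HA; rewrite /mult.
have E := repr_split Hl Hn.
split; first by move: E; case: (l 0) H0 => // k _ ->; rewrite mulSn; lia.
exists (fun i => if i == 0 then l 0 - 1 else l i).
rewrite /repr_of.
have := @sum_lin (size g) (fun i => if i == 0 then l 0 - 1 else l i) (e 0 1) l (fun _ => 0) (gen g).
rewrite sum_e // sum0 addn0 mul1n -Hl => <-; first lia.
by move=> i; rewrite /e; case: eqP => [->|]; lia.
Qed.

Lemma submax g l s j : repr_of g l s -> (forall l', repr_of g l' s -> rlen g l' <= rlen g l) ->
  j < size g -> ord_eq g (l j * gen g j) (l j).
Proof.
move=> Hl Hmax Hj; split.
  by exists (e j (l j)); rewrite /repr_of /rlen sum_e // rlen_e.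
move=> mu Hmu.
pose z := fun i => if i == j then 0 else l i.
have Hr : repr_of g (fun k => mu k + z k) s.
  by rewrite (repr_split Hl Hj); apply: repr_add.
have := Hmax _ Hr; rewrite (rlen_split l Hj) /rlen big_split /=; by rewrite leq_add2r.
Qed.

Lemma ord_uniq g s a b : ord_eq g s a -> ord_eq g s b -> a = b.
Proof.
move=> [[la [Ha Ea]] Ha'] [[lb [Hb Eb]] Hb'].
have := Ha' _ Hb; have := Hb' _ Ha; lia.
Qed.

Lemma size_pos g : is_numsgp_mingens g -> 0 < size g.
Proof. by case: g => [[_ /=]|]. Qed.

Lemma gen_pos g : is_numsgp_mingens g -> forall j, j < size g -> 0 < gen g j.
Proof.
case: g => [|x s] [Hs H0 _ _] j Hj //.
have := order_path_min ltn_trans Hs => /allP Hall.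
case: j Hj => [|j] Hj //=.
have := Hall (nth 0 s j) (@mem_nth _ 0 s j Hj); rewrite /gen /= in H0 *; lia.
Qed.

Lemma rlen_le g l s : is_numsgp_mingens g -> repr_of g l s -> rlen g l <= s.
Proof.
move=> Hg ->; apply: leq_sum_nat => i Hi; have := gen_pos Hg Hi.
by case: (gen g i) => // k _; rewrite mulnS leq_addr.
Qed.

Lemma c_rep g D T i h lam : repr_of g D T -> i < size g -> h <= D i ->
  repr_of g lam (h * gen g i) ->
  repr_of g (fun k => D k - e i h k + lam k) T /\
  rlen g (fun k => D k - e i h k + lam k) + h = rlen g D + rlen g lam.
Proof.
move=> HD Hi Hh Hl.
have P : forall k, D k - e i h k + lam k + e i h k = D k + lam k.
  by move=> k; rewrite /e; case: eqP => [->|]; lia.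
split.
  have := @sum_lin (size g) _ _ _ _ (gen g) P.
  by rewrite /repr_of sum_e // -Hl -HD; lia.
have := @sum_lin1 (size g) _ _ _ _ P.
by rewrite rlen_e.
Qed.

Lemma dprime_rep g d : 0 < size g ->
  repr_of g (fun k => if k == 0 then 0 else d k) (\sum_(1 <= i < size g) d i * gen g i).
Proof.
move=> Hn; rewrite /repr_of [RHS]big_ltn //= mul0n add0n.
by apply: eq_big_nat => i /andP[Hi _]; case: eqP => // E; rewrite E in Hi.
Qed.

Lemma T_Ap g d : (forall s, Ap g s <->
       exists l : nat -> nat,
         (forall i, 0 < i < size g -> l i <= d i) /\
         s = \sum_(1 <= i < size g) l i * gen g i) ->
  Ap g (\sum_(1 <= i < size g) d i * gen g i).
Proof. by move=> H; apply/H; exists d. Qed.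

Lemma part1 g : is_numsgp_mingens g -> rectangular Palpha g -> rectangular Pbeta g.
Proof.
move=> Hg [d [Hmax Hiff]]; exists d; split => // i Hi.
have Hn := size_pos Hg.
set D := fun k => if k == 0 then 0 else d k.
set T := \sum_(1 <= i < size g) d i * gen g i.
have HT : Ap g T by apply: T_Ap.
have HD : repr_of g D T by apply: dprime_rep.
have Bnd : forall nu, repr_of g nu T -> rlen g nu <= rlen g D.
  move=> nu Hnu; apply: leq_sum_nat => j Hj; rewrite /D.
  case: eqP => [->|/eqP j0]; first by rewrite (rep0 Hn HT Hnu).
  apply: (proj2 (Hmax j _)); first by rewrite lt0n j0.
  exact: (Ap_coef HT Hnu).
have [HA HA2] := Hmax i Hi.
case/andP: Hi => Hi0 Hi.
split; last by move=> h [Hh _]; apply: HA2.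
split => //; split.
  by exists (e i (d i)); rewrite /repr_of sum_e // /rlen rlen_e.
move=> lam Hl.
have Hh : d i <= D i by rewrite /D; case: eqP => [E|]; [rewrite E in Hi0|].
have [Hc Ec] := c_rep HD Hi Hh Hl.
have := Bnd _ Hc; lia.
Qed.

Lemma part2 g : is_numsgp_mingens g -> rectangular Pbeta g -> rectangular Pgamma g.
Proof.
move=> Hg [d [Hmax Hiff]]; exists d; split => // i Hi.
have Hn := size_pos Hg.
set D := fun k => if k == 0 then 0 else d k.
set T := \sum_(1 <= i < size g) d i * gen g i.
have HT : Ap g T by apply: T_Ap.
have HD : repr_of g D T by apply: dprime_rep.
have Bnd : forall nu, repr_of g nu T -> (forall l', repr_of g l' T -> rlen g l' <= rlen g nu) ->
    forall j, j < size g -> nu j <= D j.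
  move=> nu Hnu Hm j Hj; rewrite /D.
  case: eqP => [->|/eqP j0]; first by rewrite (rep0 Hn HT Hnu).
  apply: (proj2 (Hmax j _)); first by rewrite lt0n j0.
  split; first exact: (Ap_coef HT Hnu).
  exact: submax Hnu Hm Hj.
have [nu [Hnu Hm]] : exists nu, repr_of g nu T /\ forall l', repr_of g l' T -> rlen g l' <= rlen g nu.
  have Hb : forall n, (exists l, repr_of g l T /\ rlen g l = n) -> n <= T.
    by move=> n [l [Hl <-]]; apply: rlen_le Hg Hl.
  have [k [[nu [Hnu Ek]] Hk]] := @bounded_max (fun k => exists l, repr_of g l T /\ rlen g l = k)
     (rlen g D) T (ex_intro _ D (conj HD erefl)) Hb.
  subst k.
  exists nu; split => // l' Hl'; apply: Hk; by exists l'.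
have K : forall c, repr_of g c T -> rlen g D <= rlen g c -> forall j, j < size g -> c j = D j.
  move=> c Hc Hle.
  have H1 : rlen g nu <= rlen g D by apply: leq_sum_nat; apply: Bnd.
  have Hcm : forall l', repr_of g l' T -> rlen g l' <= rlen g c.
    move=> l' Hl'; have := Hm _ Hl'; lia.
  apply: sum_eq_pt => //; exact: Bnd Hc Hcm.
have [[HA1 HA2] Hmx] := Hmax i Hi.
case/andP: Hi => Hi0 Hi.
split; last by move=> h [Hh1 Hh2 _]; apply: Hmx.
have Hh : d i <= D i by rewrite /D; case: eqP => [E|]; [rewrite E in Hi0|].
split => //.
have Ei : repr_of g (e i (d i)) (d i * gen g i) by rewrite /repr_of sum_e.
exists (e i (d i)); split.
  by split => //; rewrite /rlen rlen_e.
move=> l' [Hl' Hord] j Hj.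
have El := ord_uniq Hord HA2.
have [Hc Ec] := c_rep HD Hi Hh Hl'.
have Hle : rlen g D <= rlen g (fun k => D k - e i (d i) k + l' k) by lia.
have := K _ Hc Hle j Hj.
have : e i (d i) j <= D j by rewrite /e; case: eqP => [->|].
lia.
Qed.

Lemma sum3 (F : nat -> nat) : \sum_(0 <= i < 3) F i = F 0 + F 1 + F 2.
Proof. by rewrite !big_nat_recr //= big_geq. Qed.
Lemma sum13 (F : nat -> nat) : \sum_(1 <= i < 3) F i = F 1 + F 2.
Proof. by rewrite big_ltn // big_nat1. Qed.

Definition G1 := [:: 8; 10; 15].

Lemma repr3 l s : repr_of G1 l s <-> s = l 0 * 8 + l 1 * 10 + l 2 * 15.
Proof. by rewrite /repr_of sum3. Qed.
Lemma rlen3 l : rlen G1 l = l 0 + l 1 + l 2.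
Proof. by rewrite /rlen sum3. Qed.

Definition l3 (a b c : nat) : nat -> nat := fun i => nth 0 [:: a; b; c] i.

Lemma inS3 x : inS G1 x <-> exists a b c, x = a * 8 + b * 10 + c * 15.
Proof.
split => [[l /repr3 H]|[a [b [c H]]]]; first by exists (l 0), (l 1), (l 2).
by exists (l3 a b c); apply/repr3.
Qed.

Lemma Ap3 s : Ap G1 s <-> (exists a b c, s = a * 8 + b * 10 + c * 15) /\
   ~ (8 <= s /\ exists a b c, s - 8 = a * 8 + b * 10 + c * 15).
Proof. by rewrite /Ap !inS3. Qed.

Lemma ord3 s k : ord_eq G1 s k <-> (exists a b c, s = a * 8 + b * 10 + c * 15 /\ a + b + c = k) /\
   (forall a b c, s = a * 8 + b * 10 + c * 15 -> a + b + c <= k).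
Proof.
split.
  move=> [[l [/repr3 H1 H2]] H3]; split.
    by exists (l 0), (l 1), (l 2); rewrite -rlen3.
  by move=> a b c H; have := H3 (l3 a b c); rewrite rlen3; apply; apply/repr3.
move=> [[a [b [c [H1 H2]]]] H3]; split.
  by exists (l3 a b c); rewrite rlen3; split => //; apply/repr3.
by move=> l /repr3 H; rewrite rlen3; apply: H3.
Qed.

Definition ex3b x := has (fun a => has (fun b => has (fun c => x == a*8+b*10+c*15)
  (iota 0 (x %/ 15).+1)) (iota 0 (x %/ 10).+1)) (iota 0 (x %/ 8).+1).

Lemma ex3P x : reflect (exists a b c, x = a * 8 + b * 10 + c * 15) (ex3b x).
Proof.
apply: (iffP idP).
  move=> /hasP [a _ /hasP [b _ /hasP [c _ /eqP H]]]; by exists a, b, c.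
move=> [a [b [c H]]]; apply/hasP; exists a; first by rewrite mem_iota; lia.
apply/hasP; exists b; first by rewrite mem_iota; lia.
apply/hasP; exists c; first by rewrite mem_iota; lia.
by apply/eqP.
Qed.

Lemma frob3 x : 38 <= x -> exists a b c, x = a * 8 + b * 10 + c * 15.
Proof.
move=> Hx; have Hr : x %% 8 < 8 by rewrite ltn_mod.
move Er : (x %% 8) Hr => r Hr.
case: r Er Hr => [|[|[|[|[|[|[|[|r]]]]]]]] Er Hr.
- by exists (x %/ 8), 0, 0; lia.
- by exists ((x - 25) %/ 8), 1, 1; lia.
- by exists ((x - 10) %/ 8), 1, 0; lia.
- by exists ((x - 35) %/ 8), 2, 1; lia.
- by exists ((x - 20) %/ 8), 2, 0; lia.
- by exists ((x - 45) %/ 8), 3, 1; lia.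
- by exists ((x - 30) %/ 8), 3, 0; lia.
- by exists ((x - 15) %/ 8), 0, 1; lia.
- lia.
Qed.

Definition box1b s := has (fun b => has (fun c => s == b*10+c*15) (iota 0 2)) (iota 0 4).

Lemma box1P s : reflect (exists b c, b <= 3 /\ c <= 1 /\ s = b * 10 + c * 15) (box1b s).
Proof.
apply: (iffP idP).
  move=> /hasP [b Hb /hasP [c Hc /eqP H]]; rewrite !mem_iota in Hb Hc; exists b, c; lia.
move=> [b [c [Hb [Hc H]]]]; apply/hasP; exists b; first by rewrite mem_iota; lia.
apply/hasP; exists c; first by rewrite mem_iota; lia.
by apply/eqP.
Qed.

Lemma tab1 : all (fun s => (ex3b s && ~~((8 <= s) && ex3b (s-8))) == box1b s) (iota 0 46).
Proof. by vm_compute. Qed.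

Lemma Ap3b s : Ap G1 s <-> (ex3b s && ~~((8 <= s) && ex3b (s-8))).
Proof.
rewrite Ap3; split.
  move=> [/ex3P -> H] /=; apply/negP => /andP [H8 /ex3P Hx]; by apply: H.
move=> /andP [/ex3P H1 H2]; split => // [[H8 /ex3P Hx]]; move: H2; by rewrite H8 Hx.
Qed.

Lemma Ap3_le s : Ap G1 s -> s <= 45.
Proof.
move=> /Ap3 [_ H]; rewrite leqNgt; apply/negP => Hs; apply: H; split; first lia.
apply: frob3; lia.
Qed.

Lemma Ap3_box s : s <= 45 -> Ap G1 s <-> box1b s.
Proof.
move=> Hs; rewrite Ap3b; have := allP tab1 s; rewrite mem_iota => /(_ ltac:(lia)).
by move=> /eqP ->.
Qed.

Definition d1 (i : nat) := if i == 1 then 3 else if i == 2 then 1 else 0.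

Lemma G1_mingens : is_numsgp_mingens G1.
Proof.
split => //.
  by exists 38 => x Hx; apply/inS3; apply: frob3.
move=> i Hi [l [Hl0 /repr3 H]].
case: i Hi Hl0 H => [|[|[|i]]] //= Hi Hl0 H; lia.
Qed.

Lemma G1_beta : rectangular Pbeta G1.
Proof.
exists d1; split.
  case => [|[|[|i]]] // _; rewrite /d1 /is_max /Pbeta /gen /=.
  - split.
      split; first (apply/Ap3; split; [by exists 0, 3, 0 | move=> [_ [a [b [c H]]]]; lia]).
      apply/ord3; split; [by exists 0, 3, 0 | move=> a b c H; lia].
    move=> h [/Ap3 [_ HA] _]; rewrite leqNgt; apply/negP => Hh; apply: HA.
    split; first lia. exists 4, (h - 4), 0; rewrite /gen /=; lia.
  - split.
      split; first (apply/Ap3; split; [by exists 0, 0, 1 | move=> [_ [a [b [c H]]]]; lia]).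
      apply/ord3; split; [by exists 0, 0, 1 | move=> a b c H; lia].
    move=> h [_ /ord3 [_ Ho]]; rewrite leqNgt; apply/negP => Hh.
    have := Ho 0 3 (h - 2); rewrite /gen /=; lia.
move=> s; split.
  move=> HA; have Hs := Ap3_le HA; move: HA; rewrite Ap3_box // => /box1P [b [c [Hb [Hc E]]]].
  exists (l3 0 b c); split; first by case => [|[|[|i]]].
  by rewrite sum13.
move=> [l [Hl E]]; rewrite sum13 /= in E.
have H1 := Hl 1 erefl; have H2 := Hl 2 erefl; rewrite /d1 /= in H1 H2.
rewrite Ap3_box; last lia.
apply/box1P; exists (l 1), (l 2); lia.
Qed.

Lemma G1_not_alpha : ~ rectangular Palpha G1.
Proof.
move=> [d [Hm Hiff]].
have H1 : 3 <= d 1.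
  apply: (proj2 (Hm 1 erefl)); rewrite /Palpha /gen /=; apply/Ap3; split; [by exists 0, 3, 0 | move=> [_ [a [b [c H]]]]; lia].
have H2 : 3 <= d 2.
  apply: (proj2 (Hm 2 erefl)); rewrite /Palpha /gen /=; apply/Ap3; split; [by exists 0, 3, 1 | move=> [_ [a [b [c H]]]]; lia].
have : Ap G1 75.
  apply/Hiff; exists (fun _ => 3); split; last by rewrite sum13.
  by case => [|[|[|i]]].
move=> /Ap3 [_ []]; split => //; by exists 4, 2, 1.
Qed.

Lemma sum4 (F : nat -> nat) : \sum_(0 <= i < 4) F i = F 0 + F 1 + F 2 + F 3.
Proof. by rewrite !big_nat_recr //= big_geq. Qed.
Lemma sum14 (F : nat -> nat) : \sum_(1 <= i < 4) F i = F 1 + F 2 + F 3.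
Proof. by rewrite big_ltn // big_ltn // big_nat1 addnA. Qed.

Definition G2 := [:: 8; 10; 11; 12].

Lemma repr4 l s : repr_of G2 l s <-> s = l 0 * 8 + l 1 * 10 + l 2 * 11 + l 3 * 12.
Proof. by rewrite /repr_of sum4. Qed.
Lemma rlen4 l : rlen G2 l = l 0 + l 1 + l 2 + l 3.
Proof. by rewrite /rlen sum4. Qed.

Definition l4 (a b c e : nat) : nat -> nat := fun i => nth 0 [:: a; b; c; e] i.

Definition R4 x := exists a b c e, x = a * 8 + b * 10 + c * 11 + e * 12.

Lemma inS4 x : inS G2 x <-> R4 x.
Proof.
split => [[l /repr4 H]|[a [b [c [e H]]]]]; first by exists (l 0), (l 1), (l 2), (l 3).
by exists (l4 a b c e); apply/repr4.
Qed.

Lemma Ap4 s : Ap G2 s <-> R4 s /\ ~ (8 <= s /\ R4 (s - 8)).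
Proof. by rewrite /Ap !inS4. Qed.

Lemma ord4 s k : ord_eq G2 s k <->
   (exists a b c e, s = a * 8 + b * 10 + c * 11 + e * 12 /\ a + b + c + e = k) /\
   (forall a b c e, s = a * 8 + b * 10 + c * 11 + e * 12 -> a + b + c + e <= k).
Proof.
split.
  move=> [[l [/repr4 H1 H2]] H3]; split.
    by exists (l 0), (l 1), (l 2), (l 3); rewrite -rlen4.
  by move=> a b c e H; have := H3 (l4 a b c e); rewrite rlen4; apply; apply/repr4.
move=> [[a [b [c [e [H1 H2]]]]] H3]; split.
  by exists (l4 a b c e); rewrite rlen4; split => //; apply/repr4.
by move=> l /repr4 H; rewrite rlen4; apply: H3.
Qed.

Lemma umax4 s k a b c e : ord_eq G2 s k -> s = a * 8 + b * 10 + c * 11 + e * 12 ->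
  a + b + c + e = k ->
  (forall a' b' c' e', s = a' * 8 + b' * 10 + c' * 11 + e' * 12 -> a' + b' + c' + e' = k ->
      [/\ a' = a, b' = b, c' = c & e' = e]) ->
  unique_maxrep G2 s.
Proof.
move=> Ho Hs Hk Hu; exists (l4 a b c e); split.
  by split; [apply/repr4 | rewrite rlen4 /= Hk].
move=> l' [Hr Hor] i Hi.
have E := ord_uniq Hor Ho; rewrite rlen4 in E.
move/repr4: Hr => Hr.
have [E0 E1 E2 E3] := Hu _ _ _ _ Hr E.
by case: i Hi => [|[|[|[|i]]]].
Qed.

Definition ex4b x := has (fun a => has (fun b => has (fun c => has (fun e =>
  x == a*8+b*10+c*11+e*12)
  (iota 0 (x %/ 12).+1)) (iota 0 (x %/ 11).+1)) (iota 0 (x %/ 10).+1)) (iota 0 (x %/ 8).+1).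

Lemma ex4P x : reflect (R4 x) (ex4b x).
Proof.
apply: (iffP idP).
  move=> /hasP [a _ /hasP [b _ /hasP [c _ /hasP [e _ /eqP H]]]]; by exists a, b, c, e.
move=> [a [b [c [e H]]]]; apply/hasP; exists a; first by rewrite mem_iota; lia.
apply/hasP; exists b; first by rewrite mem_iota; lia.
apply/hasP; exists c; first by rewrite mem_iota; lia.
apply/hasP; exists e; first by rewrite mem_iota; lia.
by apply/eqP.
Qed.

Lemma frob4 x : 26 <= x -> R4 x.
Proof.
move=> Hx; have Hr : x %% 8 < 8 by rewrite ltn_mod.
move Er : (x %% 8) Hr => r Hr.
case: r Er Hr => [|[|[|[|[|[|[|[|r]]]]]]]] Er Hr.
- by exists (x %/ 8), 0, 0, 0; lia.
- by exists ((x - 33) %/ 8), 0, 3, 0; lia.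
- by exists ((x - 10) %/ 8), 1, 0, 0; lia.
- by exists ((x - 11) %/ 8), 0, 1, 0; lia.
- by exists ((x - 12) %/ 8), 0, 0, 1; lia.
- by exists ((x - 21) %/ 8), 1, 1, 0; lia.
- by exists ((x - 22) %/ 8), 1, 0, 1; lia.
- by exists ((x - 23) %/ 8), 0, 1, 1; lia.
- lia.
Qed.

Definition box2b s := has (fun b => has (fun c => has (fun e => s == b*10+c*11+e*12)
   (iota 0 2)) (iota 0 2)) (iota 0 2).

Lemma box2P s : reflect (exists b c e, b <= 1 /\ c <= 1 /\ e <= 1 /\ s = b * 10 + c * 11 + e * 12) (box2b s).
Proof.
apply: (iffP idP).
  move=> /hasP [b Hb /hasP [c Hc /hasP [e He /eqP H]]]; rewrite !mem_iota in Hb Hc He.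
  exists b, c, e; lia.
move=> [b [c [e [Hb [Hc [He H]]]]]]; apply/hasP; exists b; first by rewrite mem_iota; lia.
apply/hasP; exists c; first by rewrite mem_iota; lia.
apply/hasP; exists e; first by rewrite mem_iota; lia.
by apply/eqP.
Qed.

Lemma tab2 : all (fun s => (ex4b s && ~~((8 <= s) && ex4b (s-8))) == box2b s) (iota 0 34).
Proof. by vm_compute. Qed.

Lemma Ap4b s : Ap G2 s <-> (ex4b s && ~~((8 <= s) && ex4b (s-8))).
Proof.
rewrite Ap4; split.
  move=> [/ex4P -> H] /=; apply/negP => /andP [H8 /ex4P Hx]; by apply: H.
move=> /andP [/ex4P H1 H2]; split => // [[H8 /ex4P Hx]]; move: H2; by rewrite H8 Hx.
Qed.

Lemma Ap4_le s : Ap G2 s -> s <= 33.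
Proof.
move=> /Ap4 [_ H]; rewrite leqNgt; apply/negP => Hs; apply: H; split; first lia.
apply: frob4; lia.
Qed.

Lemma Ap4_box s : s <= 33 -> Ap G2 s <-> box2b s.
Proof.
move=> Hs; rewrite Ap4b; have := allP tab2 s; rewrite mem_iota => /(_ ltac:(lia)).
by move=> /eqP ->.
Qed.

Lemma G2_mingens : is_numsgp_mingens G2.
Proof.
split => //.
  by exists 26 => x Hx; apply/inS4; apply: frob4.
move=> i Hi [l [Hl0 /repr4 H]].
case: i Hi Hl0 H => [|[|[|[|i]]]] //= Hi Hl0 H; lia.
Qed.

Ltac notR4 := let a := fresh in let b := fresh in let c := fresh in let e := fresh in
  let H := fresh in move=> [_ [a [b [c [e H]]]]]; lia.

Lemma G2_gamma : rectangular Pgamma G2.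
Proof.
exists (fun _ => 1); split.
  case => [|[|[|[|i]]]] // _; rewrite /is_max /Pgamma /gen /=.
  - have Ho : ord_eq G2 10 1.
      apply/ord4; split; [by exists 0, 1, 0, 0 | move=> a b c e H; lia].
    split.
      split => //; first (apply/Ap4; split; [by exists 0, 1, 0, 0 | notR4]).
      apply: (umax4 (a:=0) (b:=1) (c:=0) (e:=0) Ho) => // a b c e H1 H2; split; lia.
    move=> h [/Ap4 [_ HA] _ _]; rewrite leqNgt; apply/negP => Hh; apply: HA.
    split; first lia. exists 0, (h - 2), 0, 1; lia.
  - have Ho : ord_eq G2 11 1.
      apply/ord4; split; [by exists 0, 0, 1, 0 | move=> a b c e H; lia].
    split.
      split => //; first (apply/Ap4; split; [by exists 0, 0, 1, 0 | notR4]).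
      apply: (umax4 (a:=0) (b:=0) (c:=1) (e:=0) Ho) => // a b c e H1 H2; split; lia.
    move=> h [_ Hor [l [Hl Hu]]]; rewrite leqNgt; apply/negP => Hh.
    have M1 : maxrep G2 (h * 11) (l4 0 0 h 0).
      split; [apply/repr4; rewrite /l4 /=; lia | rewrite rlen4 /l4 /=].
      by have -> : 0 + 0 + h + 0 = h by lia.
    have M2 : maxrep G2 (h * 11) (l4 0 1 (h - 2) 1).
      split; [apply/repr4; rewrite /l4 /=; lia | rewrite rlen4 /l4 /=].
      by have -> : 0 + 1 + (h - 2) + 1 = h by lia.
    have := Hu _ M1 2 erefl; have := Hu _ M2 2 erefl; rewrite /l4 /=; lia.
  - have Ho : ord_eq G2 12 1.
      apply/ord4; split; [by exists 0, 0, 0, 1 | move=> a b c e H; lia].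
    split.
      split => //; first (apply/Ap4; split; [by exists 0, 0, 0, 1 | notR4]).
      apply: (umax4 (a:=0) (b:=0) (c:=0) (e:=1) Ho) => // a b c e H1 H2; split; lia.
    move=> h [/Ap4 [_ HA] _ _]; rewrite leqNgt; apply/negP => Hh; apply: HA.
    split; first lia. exists 2, 0, 0, (h - 2); lia.
move=> s; split.
  move=> HA; have Hs := Ap4_le HA; move: HA; rewrite Ap4_box // => /box2P [b [c [e [Hb [Hc [He E]]]]]].
  exists (l4 0 b c e); split; first by case => [|[|[|[|i]]]].
  by rewrite sum14.
move=> [l [Hl E]]; rewrite sum14 /= in E.
have H1 := Hl 1 erefl; have H2 := Hl 2 erefl; have H3 := Hl 3 erefl.
rewrite Ap4_box; last lia.
apply/box2P; exists (l 1), (l 2), (l 3); lia.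
Qed.

Lemma G2_not_beta : ~ rectangular Pbeta G2.
Proof.
move=> [d [Hm Hiff]].
have H1 : 1 <= d 1.
  apply: (proj2 (Hm 1 erefl)); rewrite /Pbeta /gen /=; split.
    apply/Ap4; split; [by exists 0, 1, 0, 0 | notR4].
  apply/ord4; split; [by exists 0, 1, 0, 0 | move=> a b c e H; lia].
have H2 : 3 <= d 2.
  apply: (proj2 (Hm 2 erefl)); rewrite /Pbeta /gen /=; split.
    apply/Ap4; split; [by exists 0, 0, 3, 0 | notR4].
  apply/ord4; split; [by exists 0, 0, 3, 0 | move=> a b c e H; lia].
have : Ap G2 43.
  apply/Hiff; exists (l4 0 1 3 0); split; last by rewrite sum14.
  by case => [|[|[|[|i]]]].
move=> /Ap4 [_ []]; split => //; by exists 0, 0, 1, 2.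
Qed.

Theorem mainTheorem6 :
  (forall g : seq nat, is_numsgp_mingens g ->
     rectangular Palpha g -> rectangular Pbeta g) /\
  (forall g : seq nat, is_numsgp_mingens g ->
     rectangular Pbeta g -> rectangular Pgamma g) /\
  (is_numsgp_mingens [:: 8; 10; 15] /\
   rectangular Pbeta [:: 8; 10; 15] /\ ~ rectangular Palpha [:: 8; 10; 15]) /\
  (is_numsgp_mingens [:: 8; 10; 11; 12] /\
   rectangular Pgamma [:: 8; 10; 11; 12] /\ ~ rectangular Pbeta [:: 8; 10; 11; 12]).
Proof.
split; first exact: part1.
split; first exact: part2.
split; first by split; [exact: G1_mingens | split; [exact: G1_beta | exact: G1_not_alpha]].
by split; [exact: G2_mingens | split; [exact: G2_gamma | exact: G2_not_beta]].
Qed.
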